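(* Let $\mathcal{M}$ be an oriented $4$-dimensional manifold endowed with a Lorentzian metric $g$ of signature $(-+++)$, let $\Psi=(\Psi^1,\Psi^2,\Psi^3)\colon\mathcal{M}\to V\simeq\mathbb{R}^3$ be smooth, and let $\mathcal{W}\subset\mathcal{M}$ be a region on which $\Psi$ is a submersion and such that $\ker T_m\Psi$ is timelike for every $m\in\mathcal{W}$. Define on $\mathcal{W}$ the vector field $\boldsymbol{W}$ by $i_{\boldsymbol{W}}\mathrm{vol}_g=\mathrm{d}\Psi^1\wedge\mathrm{d}\Psi^2\wedge\mathrm{d}\Psi^3$, the unit timelike vector field $\boldsymbol{U}=\boldsymbol{W}/\sqrt{-g(\boldsymbol{W},\boldsymbol{W})}$, $\boldsymbol{U}^\flat=g\boldsymbol{U}$, $\boldsymbol{E}^I=\mathrm{d}\Psi^I$, and the vector fields $\boldsymbol{E}_1,\boldsymbol{E}_2,\boldsymbol{E}_3$ characterized by $\boldsymbol{U}^\flat(\boldsymbol{E}_J)=0$ and $\mathrm{d}\Psi^I(\boldsymbol{E}_J)=\delta^I_J$. Then the frame $\mathcal{F}_{\mathrm{rest}}=(\boldsymbol{U},\boldsymbol{E}_1,\boldsymbol{E}_2,\boldsymbol{E}_3)$ defined on $\mathcal{W}$ and its dual coframe $\mathcal{F}^\star_{\mathrm{rest}}=(-\boldsymbol{U}^\flat,\boldsymbol{E}^1,\boldsymbol{E}^2,\boldsymbol{E}^3)$ depend only on the punctual value of $g$ and on the first-order jet of $\Psi$. Moreover, for every orientation-preserving local diffeomorphism $\varphi$ of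 $\mathcal{W}$, \[ \varphi^{*}\mathcal{F}_{\mathrm{rest}}(g,\Psi,T\Psi)=\mathcal{F}_{\mathrm{rest}}(\varphi^{*}g,\varphi^{*}\Psi,\varphi^{*}T\Psi),\qquad \varphi^{*}\mathcal{F}^\star_{\mathrm{rest}}(g,\Psi,T\Psi)=\mathcal{F}^\star_{\mathrm{rest}}(\varphi^{*}g,\varphi^{*}\Psi,\varphi^{*}T\Psi), \] i.e. the frame and coframe are general covariant.
   Context: $\mathrm{vol}_g$ is the Riemannian volume form of $g$ determined by the fixed orientation (equal to $v^0\wedge v^1\wedge v^2\wedge v^3$ for the dual of any direct $g$-orthonormal basis). Pullbacks by a local diffeomorphism $\varphi$: $\varphi^*g=(T\varphi)^\star(g\circ\varphi)T\varphi$, $\varphi^*\Psi=\Psi\circ\varphi$, $(\varphi^*\boldsymbol{X})_m=(T_m\varphi)^{-1}\boldsymbol{X}_{\varphi(m)}$ for vector fields, $(\varphi^*\alpha)_m=(T_m\varphi)^\star\alpha_{\varphi(m)}$ for covector fields. A subspace is timelike if $g$ restricted to it is negative definite. *)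

(* Defs.v *)
From Stdlib Require Import ClassicalEpsilon.
From mathcomp Require Import all_boot all_algebra.
From mathcomp Require Import reals.
Set Implicit Arguments. Unset Strict Implicit. Unset Printing Implicit Defensive.
Import GRing.Theory Num.Theory.
Local Open Scope ring_scope.

(* Everything is expressed at one point m of W, in a coordinate basis of T_m M
   (coordinates x^0..x^3, chosen direct for the fixed orientation).
   - g : 'M_4 is the matrix of g_m,
   - L : 'M_(3,4) is T_m Psi (row I = dPsi^I at m). *)

Section Defs.
Variable R : realType.

Definition bil (g : 'M[R]_4) (u v : 'cV[R]_4) : R := (u^T *m g *m v) 0 0.

Definition eta : 'M[R]_4 := \matrix_(i, j) (if i == j then (if i == 0 :> nat then -1 else 1) else 0).

Definition lorentzian (g : 'M[R]_4) : Prop :=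
  g^T = g /\ exists B : 'M[R]_4, B \in unitmx /\ B^T *m g *m B = eta.

Definition col4 (a b c d : 'cV[R]_4) : 'M[R]_4 :=
  \matrix_(i, j) ([:: a; b; c; d]`_j) i 0.

(* Riemannian volume form of g for the fixed (coordinate) orientation:
   vol_g = sqrt |det g| dx^0 /\ dx^1 /\ dx^2 /\ dx^3 *)
Definition volg (g : 'M[R]_4) (a b c d : 'cV[R]_4) : R :=
  Num.sqrt `|\det g| * \det (col4 a b c d).

(* (dPsi^1 /\ dPsi^2 /\ dPsi^3)(v1,v2,v3) = det [dPsi^I (v_J)] *)
Definition wedge3 (L : 'M[R]_(3,4)) (v1 v2 v3 : 'cV[R]_4) : R :=
  \det (\matrix_(I < 3, J < 3) (L *m [:: v1; v2; v3]`_J) I 0).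

Definition Wvec (g : 'M[R]_4) (L : 'M[R]_(3,4)) : 'cV[R]_4 :=
  epsilon (inhabits 0)
    (fun w => forall v1 v2 v3, volg g w v1 v2 v3 = wedge3 L v1 v2 v3).

Definition Uvec g L : 'cV[R]_4 :=
  (Num.sqrt (- bil g (Wvec g L) (Wvec g L)))^-1 *: Wvec g L.

Definition Uflat g L : 'rV[R]_4 := (Uvec g L)^T *m g.

Definition Emat g L : 'M[R]_(4,3) :=
  epsilon (inhabits 0)
    (fun E => Uflat g L *m E = 0 /\ L *m E = 1%:M).

Definition frame_rest g L : 'M[R]_(4, 1 + 3) := row_mx (Uvec g L) (Emat g L).

Definition coframe_rest g L : 'M[R]_(1 + 3, 4) := col_mx (- Uflat g L) L.

End Defs.

(* Main.v *)
Require Import Defs.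
From mathcomp Require Import all_boot all_algebra.
From mathcomp Require Import reals.
From Stdlib Require Import ClassicalEpsilon.
From mathcomp Require Import order.
Import Order.TTheory GRing.Theory Num.Theory.
Local Open Scope ring_scope.
Set Implicit Arguments. Unset Strict Implicit. Unset Printing Implicit Defensive.

Section Aux.
Variable R : realType.

Definition Vof (v1 v2 v3 : 'cV[R]_4) : 'M[R]_(4,3) :=
  \matrix_(i, j) ([:: v1; v2; v3]`_j) i 0.

Lemma col4E (w v1 v2 v3 : 'cV[R]_4) :
  col4 w v1 v2 v3 = row_mx w (Vof v1 v2 v3).
Proof.
apply/matrixP => i j; rewrite !mxE.
case: splitP => k Hk; rewrite ?mxE Hk.
  by rewrite (ord1 k).
by [].
Qed.

Lemma VofE (V : 'M[R]_(4,3)) : Vof (col 0 V) (col 1 V) (col 2 V) = V.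
Proof.
apply/matrixP => i j; rewrite !mxE.
by case: j => [[|[|[|k]]] Hk] //=; rewrite mxE; congr (V _ _); apply/val_inj.
Qed.

Lemma wedge3E (L : 'M[R]_(3,4)) v1 v2 v3 :
  wedge3 L v1 v2 v3 = \det (L *m Vof v1 v2 v3).
Proof.
rewrite /wedge3; congr (\det _); apply/matrixP => i j; rewrite !mxE.
by apply: eq_bigr => k _; rewrite !mxE.
Qed.

Definition predW (g : 'M[R]_4) (L : 'M[R]_(3,4)) (w : 'cV[R]_4) :=
  forall v1 v2 v3, volg g w v1 v2 v3 = wedge3 L v1 v2 v3.

Lemma predWE g L w : predW g L w <->
  forall V : 'M[R]_(4,3), Num.sqrt `|\det g| * \det (row_mx w V) = \det (L *m V).
Proof.
split=> H.
  move=> V; have := H (col 0 V) (col 1 V) (col 2 V).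
  by rewrite /volg col4E wedge3E VofE.
by move=> v1 v2 v3; rewrite /volg col4E wedge3E H.
Qed.

End Aux.
Section Aux2.
Variable R : realType.

Lemma exists_a (L : 'M[R]_(3,4)) : \rank L = 3%N -> exists a : 'rV[R]_4, ~~ (a <= L)%MS.
Proof.
move=> rL.
case: (boolP [exists i : 'I_4, ~~ (row i 1%:M <= L)%MS]).
  by case/existsP => i Hi; exists (row i 1%:M).
rewrite negb_exists => /forallP H.
have : (1%:M <= L)%MS by apply/row_subP => i; have := H i; rewrite negbK.
by move/mxrankS; rewrite mxrank1 rL.
Qed.

Lemma K_unit (a : 'rV[R]_4) (L : 'M[R]_(3,4)) :
  \rank L = 3%N -> ~~ (a <= L)%MS -> (col_mx a L : 'M_4) \in unitmx.
Proof.
move=> rL naL; rewrite -row_free_unit /row_free.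
have -> : \rank (col_mx a L) = \rank (a + L)%MS by case: (addsmxE a L) => ->.
have := ltn_leqif (mxrank_leqif_sup (addsmxSr a L)).
rewrite addsmx_sub submx_refl andbT naL rL => H.
by rewrite eqn_leq rank_leq_col H.
Qed.

End Aux2.
Section Aux3.
Variable R : realType.

Definition Vc (P : 'M[R]_4) : 'M[R]_(4,3) :=
  invmx P *m (col_mx (0 : 'M_(1,3)) (1%:M : 'M_3) : 'M_(1+3,3)).

Lemma det_row_col (u : 'cV[R]_(1+3)) :
  \det (row_mx u (col_mx (0 : 'M_(1,3)) (1%:M : 'M_3)) : 'M_(1+3)) = u 0 0.
Proof.
rewrite -[u]vsubmxK -block_mxEh det_lblock det1 mulr1 det_mx11.
by rewrite mxE vsubmxK; congr (u _ _); apply/val_inj.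
Qed.

Lemma keyP (P : 'M[R]_4) (w : 'cV[R]_4) : P \in unitmx ->
  (P *m w) 0 0 = \det P * \det (row_mx w (Vc P)).
Proof.
move=> uP.
rewrite -det_mulmx (@mul_mx_row _ 4 4 1 3 P w (Vc P)) /Vc mulKVmx //.
exact: (esym (det_row_col (P *m w))).
Qed.

Lemma W_uniq (w w' : 'cV[R]_4) :
  (forall V : 'M_(4,3), \det (row_mx w V) = \det (row_mx w' V)) -> w = w'.
Proof.
move=> H; apply/matrixP => i j; rewrite (ord1 j).
have uP := @unitmx_perm R 4 (perm.tperm 0 i).
have := keyP w uP; rewrite H -keyP // -!row_permE !mxE.
by rewrite perm.tpermL.
Qed.

End Aux3.
Section Aux4.
Variable R : realType.

Lemma det_row_col2 (s : R) (X : 'M[R]_(1+3,3)) :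
  \det (row_mx (col_mx (s%:M : 'M_1) (0 : 'M_(3,1))) X : 'M_(1+3)) = s * \det (dsubmx X).
Proof.
by rewrite -[X]vsubmxK -block_mxEh det_ublock det_scalar1 col_mxKd.
Qed.

Lemma col_mx00 (s : R) (M : 'cV[R]_(1+3)) :
  M = col_mx (s%:M : 'M_1) (0 : 'M_(3,1)) -> M 0 0 = s.
Proof.
move=> ->.
rewrite (_ : (0 : 'I_(1+3)) = lshift 3 (0 : 'I_1)); last by apply/val_inj.
by rewrite col_mxEu mxE /= mulr1n.
Qed.

Lemma W_exists (g : 'M[R]_4) (L : 'M[R]_(3,4)) : \det g != 0 -> \rank L = 3%N ->
  exists w, predW g L w /\ L *m w = 0 /\ w != 0.
Proof.
move=> dg rL.
have [a na] := exists_a rL.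
have uK := K_unit rL na.
set K : 'M_(1+3,4) := col_mx a L in uK.
set c := Num.sqrt `|\det g|.
have c0 : c != 0 by rewrite sqrtr_eq0 normr_le0.
have dK : \det (K : 'M_4) != 0 by rewrite -unitfE -unitmxE.
set s := \det (K : 'M_4) / c.
have s0 : s != 0 by rewrite mulf_neq0 // invr_eq0.
set w : 'cV_4 := invmx (K : 'M_4) *m (col_mx (s%:M : 'M_1) (0 : 'M_(3,1))).
have Kw : (K : 'M_4) *m w = col_mx (s%:M : 'M_1) (0 : 'M_(3,1)) by rewrite /w mulKVmx.
exists w; split; last split.
- apply/predWE => V.
  have : \det (K : 'M_4) * \det (row_mx w V) = s * \det (L *m V).
    rewrite -det_mulmx (@mul_mx_row _ 4 4 1 3 K w V) Kw.
    have KV : dsubmx (K *m V) = L *m V by rewrite /K mul_col_mx col_mxKd.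
    by rewrite -KV -det_row_col2.
  move=> H; apply: (mulfI dK); rewrite mulrCA H /s.
  by rewrite mulrAC mulrCA mulfV // mulr1.
- have KV : dsubmx (K *m w) = L *m w by rewrite /K mul_col_mx col_mxKd.
  by rewrite -KV Kw col_mxKd.
- apply/eqP => w0; have := col_mx00 Kw; rewrite w0 mulmx0 mxE => /eqP.
  by rewrite eq_sym (negbTE s0).
Qed.

End Aux4.

Section Aux5.
Variable R : realType.

Lemma Wvec_char (g : 'M[R]_4) (L : 'M[R]_(3,4)) w :
  \det g != 0 -> predW g L w -> Wvec g L = w.
Proof.
move=> dg Pw.
have c0 : Num.sqrt `|\det g| != 0 by rewrite sqrtr_eq0 normr_le0.
have P0 : predW g L (Wvec g L) by apply: (epsilon_spec (inhabits 0) (predW g L)); exists w.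
apply: W_uniq => V; apply: (mulfI c0).
by move/predWE: P0 => ->; move/predWE: Pw => ->.
Qed.

Lemma Wvec_spec (g : 'M[R]_4) (L : 'M[R]_(3,4)) : \det g != 0 -> \rank L = 3%N ->
  predW g L (Wvec g L) /\ L *m Wvec g L = 0 /\ Wvec g L != 0.
Proof.
move=> dg rL; have [w [Pw [Lw w0]]] := W_exists dg rL.
by rewrite (Wvec_char dg Pw).
Qed.

Lemma Emat_char (g : 'M[R]_4) (L : 'M[R]_(3,4)) E :
  (col_mx (Uflat g L) L : 'M_4) \in unitmx ->
  Uflat g L *m E = 0 -> L *m E = 1%:M -> Emat g L = E.
Proof.
move=> uK E1 E2.
have [P1 P2] : Uflat g L *m Emat g L = 0 /\ L *m Emat g L = 1%:M.
  by apply: (epsilon_spec (inhabits 0) (fun E => Uflat g L *m E = 0 /\ L *m E = 1%:M)); exists E.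
have H : (col_mx (Uflat g L) L : 'M_4) *m Emat g L = (col_mx (Uflat g L) L : 'M_4) *m E.
  by rewrite !(@mul_col_mx _ 1 3 4 3) P1 P2 E1 E2.
by rewrite -(mulKmx uK (Emat g L)) H mulKmx.
Qed.

Lemma Emat_spec (g : 'M[R]_4) (L : 'M[R]_(3,4)) :
  (col_mx (Uflat g L) L : 'M_4) \in unitmx ->
  Uflat g L *m Emat g L = 0 /\ L *m Emat g L = 1%:M.
Proof.
move=> uK.
set E := invmx (col_mx (Uflat g L) L : 'M_4) *m (col_mx (0 : 'M_(1,3)) (1%:M : 'M_3) : 'M_(1+3,3)).
have H : (col_mx (Uflat g L) L : 'M_4) *m E = col_mx (0 : 'M_(1,3)) (1%:M : 'M_3) by rewrite mulKVmx.
move: H; rewrite (@mul_col_mx _ 1 3 4 3) => H; have [H1 H2] := @eq_col_mx _ 1 3 3 _ _ _ _ H.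
by rewrite (Emat_char uK H1 H2).
Qed.

Lemma bil_scale (g : 'M[R]_4) (k : R) u : bil g (k *: u) (k *: u) = k * k * bil g u u.
Proof.
have tZ : (k *: u)^T = k *: u^T by apply/matrixP => i j; rewrite !mxE.
by rewrite /bil tZ -!scalemxAl -scalemxAr !mxE mulrA.
Qed.

Lemma eta_diag : eta R = diag_mx (\row_(i < 4) (if i == 0 :> nat then -1 else 1)).
Proof.
apply/matrixP => i j; rewrite !mxE.
by case: (i == j); rewrite ?mulr1n ?mulr0n.
Qed.

Lemma det_eta : \det (eta R) != 0.
Proof.
rewrite eta_diag det_diag !big_ord_recl big_ord0 !mxE /=.
by rewrite !mul1r mulr1 oppr_eq0 oner_eq0.
Qed.

End Aux5.

Theorem theorem2p6 (R : realType) (g : 'M[R]_4) (L : 'M[R]_(3,4)) (A : 'M[R]_4) :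
  lorentzian g ->
  \rank L = 3%N ->
  (forall v : 'cV[R]_4, L *m v = 0 -> v != 0 -> bil g v v < 0) ->
  A \in unitmx -> 0 < \det A ->
  coframe_rest g L *m frame_rest g L = 1%:M /\
  frame_rest (A^T *m g *m A) (L *m A) = invmx A *m frame_rest g L /\
  coframe_rest (A^T *m g *m A) (L *m A) = coframe_rest g L *m A.
Proof.
move=> [gsym [B [uB HB]]] rL tl uA dA.
have dg : \det g != 0.
  apply: contraNneq (det_eta R) => dg0.
  by rewrite -HB !det_mulmx dg0 mulr0 mul0r.
have [PW [LW W0]] := Wvec_spec dg rL.
set W := Wvec g L in PW LW W0.
have q0 : bil g W W < 0 := tl W LW W0.
set r := Num.sqrt (- bil g W W).
have r0 : 0 < r by rewrite sqrtr_gt0 oppr_gt0.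
have rr : r * r = - bil g W W by rewrite -expr2 sqr_sqrtr // oppr_ge0 ltW.
have UE : Uvec g L = r^-1 *: W by [].
have LU : L *m Uvec g L = 0 by rewrite UE -scalemxAr LW scaler0.
have UU : Uflat g L *m Uvec g L = - 1%:M.
  apply/matrixP => i j; rewrite (ord1 i) (ord1 j) /Uflat.
  have := bil_scale g r^-1 W; rewrite -UE /bil => ->.
  rewrite [RHS]mxE [in RHS]mxE /= mulr1n -invfM rr invrN mulNr mulVf //.
  by rewrite ltr0_neq0.
have nUL : ~~ (Uflat g L <= L)%MS.
  apply/negP => /submxP [D HD].
  move: UU; rewrite HD -mulmxA LU mulmx0 => /matrixP /(_ 0 0).
  by rewrite !mxE /= mulr1n => /eqP; rewrite eq_sym oppr_eq0 oner_eq0.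
have uK := K_unit rL nUL.
have [E1 E2] := Emat_spec uK.
split.
  rewrite /coframe_rest /frame_rest mul_col_row mulNmx UU opprK mulNmx E1 oppr0 LU E2.
  by rewrite -scalar_mx_block.
set X := invmx A.
have dA0 : \det A != 0 by rewrite gt_eqF.
have dg' : \det (A^T *m g *m A) != 0 by rewrite !det_mulmx det_tr !mulf_neq0.
have rL' : \rank (L *m A) = 3%N by rewrite mxrankMfree // row_free_unit.
have PW' : predW (A^T *m g *m A) (L *m A) (X *m W).
  apply/predWE => V.
  have -> : Num.sqrt `|\det (A^T *m g *m A)| = \det A * Num.sqrt `|\det g|.
    rewrite !det_mulmx det_tr mulrC mulrA -expr2.
    by rewrite normrM sqrtrM ?normr_ge0 // normrX sqrtr_sqr normr_id (gtr0_norm dA).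
  have E : \det (row_mx (X *m W) V) = \det X * \det (row_mx W (A *m V)).
    by rewrite -det_mulmx (@mul_mx_row _ 4 4 1 3) /X mulKmx.
  rewrite -mulmxA; move/predWE: PW => <-.
  transitivity (\det A * Num.sqrt `|\det g| * (\det X * \det (row_mx W (A *m V)))).
    by congr (_ * _); exact: E.
  by rewrite /X det_inv -mulrA mulrCA mulVKf.
have W' := Wvec_char dg' PW'.
have h1 : forall u : 'cV[R]_4, (X *m u)^T *m A^T = u^T.
  by move=> u; rewrite -trmx_mul mulmxA /X mulmxV // mul1mx.
have bil' : bil (A^T *m g *m A) (X *m W) (X *m W) = bil g W W.
  by rewrite /bil !mulmxA h1 -[W^T *m g *m A *m X]mulmxA /X mulmxV // mulmx1.
have U' : Uvec (A^T *m g *m A) (L *m A) = X *m Uvec g L.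
  by rewrite /Uvec W' bil' -/W -/r scalemxAr.
have Uf' : Uflat (A^T *m g *m A) (L *m A) = Uflat g L *m A.
  by rewrite /Uflat U' !mulmxA h1.
have uK' : (col_mx (Uflat (A^T *m g *m A) (L *m A)) (L *m A) : 'M_4) \in unitmx.
  by rewrite Uf' -(@mul_col_mx _ 1 3 4 4) unitmx_mul uK uA.
have E' : Emat (A^T *m g *m A) (L *m A) = X *m Emat g L.
  apply: Emat_char => //.
    by rewrite Uf' -mulmxA /X mulKVmx.
  by rewrite -mulmxA /X mulKVmx.
split.
  by rewrite /frame_rest U' E' -mul_mx_row.
by rewrite /coframe_rest Uf' mul_col_mx mulNmx.
Qed.
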